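(* Let $F$ be a topological hyperfield and $*\in\{s,w\}$. Let $M$ be a rank $r$ matroid on a finite set $E$ such that $\operatorname{Real}^*_F(M)\ne\emptyset$, and let $A\subseteq E$ have $r+1$ elements. Let $\tilde\varphi:A^r\to F$ be an alternating function that is nonzero exactly on the ordered bases of $M$ contained in $A$. Then there is a Grassmann–Plücker function $\varphi:E^r\to F$ of the appropriate type ($*$) that extends $\tilde\varphi$ and satisfies $[\varphi]\in\operatorname{Real}^*_F(M)$.
   Context: Hyperfields. A hyperfield $(F,\odot,\boxplus,1,0)$ has the following data and axioms. - $\odot$ is a commutative multiplication and $\boxplus$ is a hyperaddition assigning to each $x,y$ a nonempty subset $x\boxplus y\subseteq F$ (extended to subsets by unions). - $\boxplus$ is commutative and associative, and $x\boxplus 0=\{x\}$. - Each $x$ has a unique $-x$ with $0\in x\boxplus(-x)$, and $x\in y\boxplus z \iff z\in x\boxplus(-y)$. - $(F\setminus\{0\},\odot,1)$ is an abelian group $F^\times$, $0\odot x=0$, and $x\odot(y\boxplus z)=(x\odot y)\boxplus(x\odot z)$. A topological hyperfield is a hyperfield with a topology in which $F\setminus\{0\}$ is open, multiplication is continuous, and inversion on $F^\times$ is continuous. Grassmannians. A function $\varphi:E^r\to F$ is alternating if permuting arguments by $\sigma$ multiplies the value by $\operatorname{sign}\sigma$. A strong Grassmann–Plücker (GP) function of rank $r$ on $E$ is a function $\varphi:E^r\to F$ with the following properties. - $\varphi$ is not identically $0$. - $\varphi$ is alternating. - For all $(i_1,\dots,i_{r+1})\in E^{r+1}$ and $(j_1,\dots,j_{r-1})\in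 E^{r-1}$: $$0\in\boxplus_{k=1}^{r+1}(-1)^k\varphi(i_1,\dots,\widehat{i_k},\dots,i_{r+1})\odot\varphi(i_k,j_1,\dots,j_{r-1}).$$ A weak GP function is a function $\varphi:E^r\to F$ with the following properties. - $\varphi$ is nonzero and alternating. - Its support is the set of bases of a matroid. - The relation holds when $|\{i\}\setminus\{j\}|=3$. $\operatorname{Gr}^*(r,F^E)$ is the set of strong ($*=s$) or weak ($*=w$) GP functions modulo $\varphi\sim\alpha\varphi$, $\alpha\in F^\times$. Realization spaces. For a matroid $M$ on $E$ of rank $r$, $\operatorname{Real}^*_F(M)$ is the set of $[\varphi]\in\operatorname{Gr}^*(r,F^E)$ such that $\varphi$ is nonzero exactly on the ordered bases of $M$. An ordered basis is an $r$-tuple of distinct elements whose underlying set is a basis. *)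

(* Defs.v *)
From HB Require Import structures.
From mathcomp Require Import all_boot all_order all_fingroup.
Set Implicit Arguments. Unset Strict Implicit. Unset Printing Implicit Defensive.

(* hadd x y z  means  z \in x [+] y.                                   *)
Record Hyperfield := {
  hcar :> Type;
  hzero : hcar;
  hone : hcar;
  hmul : hcar -> hcar -> hcar;
  hadd : hcar -> hcar -> hcar -> Prop;
  hneg : hcar -> hcar;
  hinv : hcar -> hcar;
  hadd_nonempty : forall x y, exists z, hadd x y z;
  hadd_comm : forall x y z, hadd x y z <-> hadd y x z;
  hadd_assoc : forall x y z w,
      (exists u, hadd x y u /\ hadd u z w) <-> (exists u, hadd y z u /\ hadd x u w);
  hadd_zero : forall x z, hadd x hzero z <-> z = x;
  hneg_spec : forall x, hadd x (hneg x) hzero;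
  hneg_unique : forall x y, hadd x y hzero -> y = hneg x;
  hadd_rev : forall x y z, hadd y z x <-> hadd x (hneg y) z;
  hmulC : forall x y, hmul x y = hmul y x;
  hmulA : forall x y z, hmul x (hmul y z) = hmul (hmul x y) z;
  hmul1 : forall x, hmul hone x = x;
  hmul0 : forall x, hmul hzero x = hzero;
  hone_neq0 : hone <> hzero;
  hmul_neq0 : forall x y, x <> hzero -> y <> hzero -> hmul x y <> hzero;
  hinv_neq0 : forall x, x <> hzero -> hinv x <> hzero;
  hmulV : forall x, x <> hzero -> hmul x (hinv x) = hone;
  hmul_addr : forall x y z w,
      (exists u, hadd y z u /\ w = hmul x u) <-> hadd (hmul x y) (hmul x z) w
}.

Record TopHyperfield := {
  thf :> Hyperfield;
  topen : (thf -> Prop) -> Prop;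
  topen_full : topen (fun _ => True);
  topen_union : forall (I : Type) (U : I -> thf -> Prop),
      (forall i, topen (U i)) -> topen (fun x => exists i, U i x);
  topen_inter : forall U V, topen U -> topen V -> topen (fun x => U x /\ V x);
  topen_units : topen (fun x => x <> hzero thf);
  tmul_cont : forall x y U, topen U -> U (hmul x y) ->
      exists V W, [/\ topen V, topen W, V x, W y &
                      forall a b, V a -> W b -> U (hmul a b)];
  tinv_cont : forall x U, x <> hzero thf -> topen U -> U (hinv x) ->
      exists V, [/\ topen V, V x &
                 forall a, a <> hzero thf -> V a -> U (hinv a)]
}.

Section GP.
Variable F : Hyperfield.
Local Notation "0" := (hzero F).
Local Notation "1" := (hone F).

Fixpoint hsum (l : seq F) (z : F) : Prop :=
  match l with
  | [::] => z = 0
  | x :: l' => exists u, hsum l' u /\ hadd x u z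
  end.

Definition hsign (b : bool) : F := if b then hneg 1 else 1.

Variable E : finType.

Definition is_matroid_bases (B : {set {set E}}) : Prop :=
  B != set0 /\
  forall B1 B2, B1 \in B -> B2 \in B -> forall x, x \in B1 :\: B2 ->
    exists2 y, y \in B2 :\: B1 & (y |: (B1 :\ x)) \in B.

Definition matroid_rank (B : {set {set E}}) (r : nat) : Prop :=
  forall b, b \in B -> #|b| = r.

Variable r : nat.

Definition ordered_basis (B : {set {set E}}) (x : {ffun 'I_r -> E}) : Prop :=
  injective x /\ [set x i | i : 'I_r] \in B.

Definition alternating (phi : {ffun 'I_r -> E} -> F) : Prop :=
  forall (x : {ffun 'I_r -> E}) (s : 'S_r),
    phi [ffun i => x (s i)] = hmul (hsign (odd_perm s)) (phi x).

Definition drop_at (i : {ffun 'I_r.+1 -> E}) (k : 'I_r.+1) : {ffun 'I_r -> E} :=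
  [ffun t : 'I_r => i (lift k t)].

(* (e, j_1, ..., j_{r-1}) *)
Definition cons_at (e : E) (j : {ffun 'I_r.-1 -> E}) : {ffun 'I_r -> E} :=
  [ffun t : 'I_r => nth e (e :: codom j) t].

(* the Grassmann-Pluecker relation for (i, j); index k is 0-based, so the
   sign (-1)^k of the paper (1-based) becomes (-1)^(k+1) *)
Definition GP_rel (phi : {ffun 'I_r -> E} -> F)
    (i : {ffun 'I_r.+1 -> E}) (j : {ffun 'I_r.-1 -> E}) : Prop :=
  hsum [seq hmul (hsign (odd (nat_of_ord k).+1))
              (hmul (phi (drop_at i k)) (phi (cons_at (i k) j)))
       | k : 'I_r.+1 <- enum 'I_r.+1] 0.

Definition strong_GP (phi : {ffun 'I_r -> E} -> F) : Prop :=
  [/\ exists x, phi x <> 0,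
      alternating phi &
      (0 < r)%N -> forall (i : {ffun 'I_r.+1 -> E}) (j : {ffun 'I_r.-1 -> E}), GP_rel phi i j].

Definition weak_GP (phi : {ffun 'I_r -> E} -> F) : Prop :=
  [/\ exists x, phi x <> 0,
      alternating phi,
      (exists B, is_matroid_bases B /\
                 forall x, phi x <> 0 <-> ordered_basis B x) &
      (0 < r)%N -> forall (i : {ffun 'I_r.+1 -> E}) (j : {ffun 'I_r.-1 -> E}),
        #|[set i k | k : 'I_r.+1] :\: [set j t | t : 'I_r.-1]| = 3 ->
        GP_rel phi i j].

End GP.

Inductive GPkind := GPs | GPw.

Definition is_GP (F : Hyperfield) (star : GPkind) (E : finType) (r : nat)
    (phi : {ffun 'I_r -> E} -> F) : Prop :=
  match star with GPs => strong_GP phi | GPw => weak_GP phi end.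

(* [phi] \in Real^*_F(M), stated on a representative phi (membership is
   invariant under phi ~ a phi, so this is the quotient unfolded) *)
Definition in_Real (F : Hyperfield) (star : GPkind) (E : finType) (r : nat)
    (M : {set {set E}}) (phi : {ffun 'I_r -> E} -> F) : Prop :=
  is_GP star phi /\ forall x, phi x <> hzero F <-> ordered_basis M x.

Definition Real_nonempty (F : Hyperfield) (star : GPkind) (E : finType) (r : nat)
    (M : {set {set E}}) : Prop :=
  exists phi : {ffun 'I_r -> E} -> F, in_Real star M phi.

(* Main.v *)
Require Import Defs.
From HB Require Import structures.
From mathcomp Require Import all_boot all_order all_fingroup.
From Stdlib Require Import Classical.
Set Implicit Arguments. Unset Strict Implicit. Unset Printing Implicit Defensive.

Lemma hmulA' (F : Hyperfield) : associative (@hmul F).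
Proof. by move=> x y z; rewrite hmulA. Qed.
Lemma hmulC' (F : Hyperfield) : commutative (@hmul F).
Proof. exact: hmulC. Qed.
Lemma hmul1' (F : Hyperfield) : left_id (hone F) (@hmul F).
Proof. exact: hmul1. Qed.

HB.instance Definition _ (F : Hyperfield) :=
  Monoid.isComLaw.Build (hcar F) (hone F) (@hmul F) (@hmulA' F) (@hmulC' F) (@hmul1' F).

Section H.
Variable F : Hyperfield.
Local Notation "0" := (hzero F).
Local Notation "1" := (hone F).
Local Notation mul := (@hmul F).

Lemma hmulr0 x : mul x 0 = 0. Proof. by rewrite hmulC hmul0. Qed.
Lemma hmulr1 x : mul x 1 = x. Proof. by rewrite hmulC hmul1. Qed.
Lemma hmulCA x y z : mul x (mul y z) = mul y (mul x z).
Proof. by rewrite !hmulA (hmulC x y). Qed.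

Lemma hinvK x : x <> 0 -> hinv x = hinv x /\ hinv (hinv x) = x.
Proof.
move=> Hx; split=> //.
have h1 := hmulV Hx; have h2 := hmulV (hinv_neq0 Hx).
by rewrite -{1}(hmul1 (hinv (hinv x))) -h1 -hmulA h2 hmulr1.
Qed.

Lemma prod_neq0 (I : finType) (P : pred I) (f : I -> F) :
  (forall i, P i -> f i <> 0) -> \big[mul/1]_(i | P i) f i <> 0.
Proof.
move=> H; apply: (big_ind (fun v => v <> 0)) => //.
- exact: hone_neq0.
- by move=> a b; apply: hmul_neq0.
Qed.

Lemma hsum_scale c l z : hsum l z -> hsum (map (mul c) l) (mul c z).
Proof.
elim: l z => [|x l IH] z /=; first by move=> ->; rewrite hmulr0.
case=> u [Hu Hx]; exists (mul c u); split; first exact: IH.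
by apply (proj1 (hmul_addr _ _ _ _)); exists z.
Qed.

Lemma mul_neq0_iff a b : a <> 0 -> (mul a b <> 0 <-> b <> 0).
Proof.
move=> Ha; split; last exact: hmul_neq0.
by move=> H Hb; apply: H; rewrite Hb hmulr0.
Qed.

End H.

Definition Tp (F : Hyperfield) (E : finType) (r : nat) (t : E -> F)
  (x : {ffun 'I_r -> E}) := \big[@hmul F/hone F]_(i < r) t (x i).

Lemma Tp_perm (F : Hyperfield) (E : finType) (r : nat) (t : E -> F)
  (x : {ffun 'I_r -> E}) (s : 'S_r) : Tp t [ffun i => x (s i)] = Tp t x.
Proof.
rewrite /Tp [RHS](reindex_inj (@perm_inj _ s)).
by apply: eq_bigr => i _; rewrite ffunE.
Qed.

Lemma Tp_neq0 (F : Hyperfield) (E : finType) (r : nat) (t : E -> F)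
  (x : {ffun 'I_r -> E}) : (forall e, t e <> hzero F) -> Tp t x <> hzero F.
Proof. by move=> H; apply: prod_neq0 => i _. Qed.

Lemma exists_enum (E : finType) (r : nat) (S : {set E}) : #|S| = r ->
  exists x : {ffun 'I_r -> E}, injective x /\ [set x i | i : 'I_r] = S.
Proof.
move=> H.
exists [ffun i => enum_val (A := S) (cast_ord (esym H) i)]; split.
- move=> i j; rewrite !ffunE => /enum_val_inj/cast_ord_inj; done.
- apply/setP => e; apply/imsetP/idP.
  + by case=> i _ ->; rewrite ffunE enum_valP.
  + move=> He; exists (cast_ord H (enum_rank_in He e)) => //.
    by rewrite ffunE cast_ordK enum_rankK_in.
Qed.

Lemma perm_between (E : finType) (r : nat) (x y : {ffun 'I_r -> E}) :
  injective x -> [set x i | i : 'I_r] = [set y i | i : 'I_r] ->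
  exists s : 'S_r, x = [ffun i => y (s i)].
Proof.
move=> Hx Hs.
have H : forall i, exists j, x i = y j.
  move=> i; have : x i \in [set y i | i : 'I_r] by rewrite -Hs imset_f.
  by case/imsetP=> j _ ->; exists j.
have [f Hf] := fin_all_exists H.
have finj : injective f by move=> a b Hab; apply: Hx; rewrite !Hf Hab.
exists (perm finj); apply/ffunP => i; by rewrite !ffunE permE -Hf.
Qed.

Lemma Tp_drop (F : Hyperfield) (E : finType) (r : nat) (t : E -> F)
  (i : {ffun 'I_r.+1 -> E}) (k : 'I_r.+1) :
  hmul (t (i k)) (Tp t (drop_at i k)) = \big[@hmul F/hone F]_(l < r.+1) t (i l).
Proof.
rewrite (bigD1_ord k) //= /Tp; congr hmul.
by apply: eq_bigr => l _; rewrite ffunE.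
Qed.

Lemma Tp_cons (F : Hyperfield) (E : finType) (r : nat) (t : E -> F)
  (e : E) (j : {ffun 'I_r -> E}) :
  Tp t (cons_at (r := r.+1) e j) = hmul (t e) (\big[@hmul F/hone F]_(m < r) t (j m)).
Proof.
rewrite /Tp big_ord_recl ffunE /=; congr hmul.
apply: eq_bigr => m _; rewrite ffunE /= codomE (nth_map m).
  by rewrite nth_ord_enum.
by rewrite size_enum_ord add0n ltn_ord.
Qed.

Lemma ac6 (F : Hyperfield) (al a b c p q sg : F) :
  hmul sg (hmul (hmul al (hmul a p)) (hmul al (hmul (hmul b c) q))) =
  hmul (hmul al (hmul al (hmul (hmul b a) c))) (hmul sg (hmul p q)).
Proof.
rewrite -!hmulA.
rewrite (hmulCA sg al); congr (hmul al _).
rewrite (hmulCA p al) (hmulCA a al) (hmulCA sg al); congr (hmul al _).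
rewrite (hmulCA p b) (hmulCA a b) (hmulCA sg b); congr (hmul b _).
rewrite (hmulCA sg a); congr (hmul a _).
by rewrite (hmulCA p c) (hmulCA sg c).
Qed.

Lemma GP_transfer (F : Hyperfield) (E : finType) (r : nat) (t : E -> F) (al : F)
  (psi : {ffun 'I_r -> E} -> F) (i : {ffun 'I_r.+1 -> E}) (j : {ffun 'I_r.-1 -> E}) :
  (0 < r)%N -> GP_rel psi i j ->
  GP_rel (fun x => hmul al (hmul (Tp t x) (psi x))) i j.
Proof.
case: r t psi i j => [//|r] t psi i j _.
rewrite /GP_rel.
set K := hmul al (hmul al (hmul (\big[@hmul F/hone F]_(l < r.+2) t (i l))
                              (\big[@hmul F/hone F]_(m < r) t (j m)))).
move=> H.
have -> : forall s : seq 'I_r.+2,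
  [seq hmul (hsign F (odd (nat_of_ord k).+1))
     (hmul (hmul al (hmul (Tp t (drop_at i k)) (psi (drop_at i k))))
        (hmul al (hmul (Tp t (cons_at (i k) j)) (psi (cons_at (i k) j)))))
  | k <- s] =
  map (hmul K) [seq hmul (hsign F (odd (nat_of_ord k).+1))
              (hmul (psi (drop_at i k)) (psi (cons_at (i k) j))) | k <- s].
  move=> s; rewrite -map_comp; apply: eq_map => k /=.
  rewrite /K Tp_cons -(Tp_drop t i k).
  set a := Tp t (drop_at i k); set b := t (i k); set c := \big[_/_]_(m < r) _.
  exact: ac6.
by have := hsum_scale K H; rewrite hmulr0.
Qed.

Lemma alt_of_GP (F : Hyperfield) star (E : finType) (r : nat) (phi : {ffun 'I_r -> E} -> F) :
  is_GP star phi -> alternating phi.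
Proof. by case: star => -[]. Qed.

Theorem lemma5p8 (F : TopHyperfield) (star : GPkind) (E : finType) (r : nat)
    (M : {set {set E}}) (HM : is_matroid_bases M) (HMr : matroid_rank M r)
    (Hreal : Real_nonempty F star r M)
    (A : {set E}) (HA : #|A| = r.+1)
    (phit : {ffun 'I_r -> E} -> F)
    (Halt : forall (x : {ffun 'I_r -> E}) (s : 'S_r), (forall t, x t \in A) ->
        phit [ffun i => x (s i)] = hmul (hsign F (odd_perm s)) (phit x))
    (Hsupp : forall x : {ffun 'I_r -> E}, (forall t, x t \in A) ->
        (phit x <> hzero F <-> ordered_basis M x)) :
  exists phi : {ffun 'I_r -> E} -> F,
    in_Real star M phi /\
    forall x : {ffun 'I_r -> E}, (forall t, x t \in A) -> phi x = phit x.
Proof.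
case: Hreal => psi [Hpsi Hpsupp].
have psialt := alt_of_GP Hpsi.
have Hrep : forall a : E, exists x : {ffun 'I_r -> E},
    a \in A -> injective x /\ [set x i | i : 'I_r] = A :\ a.
  move=> a; case aA: (a \in A); last by exists [ffun _ => a].
  have [|x Hx] := @exists_enum E r (A :\ a); last by exists x.
  by move: HA; rewrite (cardsD1 a A) aA add1n => -[].
have [rep Hrep'] := fin_all_exists Hrep.
have repA : forall a, a \in A -> forall i, rep a i \in A.
  move=> a aA i; have : rep a i \in [set rep a i | i : 'I_r] by apply: imset_f.
  by rewrite (proj2 (Hrep' a aA)) in_setD1 => /andP[].
have repB : forall a, a \in A -> A :\ a \in M -> ordered_basis M (rep a).
  by move=> a aA aM; split; [exact: (proj1 (Hrep' a aA)) | rewrite (proj2 (Hrep' a aA))].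
pose rho a := hmul (phit (rep a)) (hinv (psi (rep a))).
have rho0 : forall a, a \in A -> A :\ a \in M -> rho a <> hzero F.
  move=> a aA aM; apply: hmul_neq0.
    by apply/(Hsupp _ (repA a aA)); apply: repB.
  by apply: hinv_neq0; apply/Hpsupp; apply: repB.
pose t e := if (e \in A) && (A :\ e \in M) then hinv (rho e) else hone F.
have t0 : forall e, t e <> hzero F.
  move=> e; rewrite /t; case: ifP => [/andP[eA eM]|_]; last exact: hone_neq0.
  by apply: hinv_neq0; apply: rho0.
pose P := \big[@hmul F/hone F]_(e in A) t e.
have P0 : P <> hzero F by apply: prod_neq0 => e _.
pose al := hinv P.
have al0 : al <> hzero F by apply: hinv_neq0.
pose phi := fun x => hmul al (hmul (Tp t x) (psi x)).
have phi0 : forall x, phi x <> hzero F <-> psi x <> hzero F.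
  move=> x; rewrite /phi; rewrite mul_neq0_iff //; apply: mul_neq0_iff.
  exact: Tp_neq0.
have phialt : alternating phi.
  move=> x s; rewrite /phi Tp_perm psialt.
  by rewrite (hmulCA (Tp t x)) (hmulCA al).
have phinz : exists x, phi x <> hzero F.
  have : exists x, psi x <> hzero F by case: (star) Hpsi => -[].
  by case=> x Hx; exists x; apply/phi0.
have phisupp : forall x, phi x <> hzero F <-> ordered_basis M x.
  by move=> x; rewrite phi0.
exists phi; split.
  split=> //; case: (star) Hpsi => -[_ _].
  - move=> HG; split=> // r0 i j; exact: GP_transfer (HG r0 i j).
  - move=> [B [HB HBs]] HG; split=> //.
      exists B; split=> // x; rewrite phi0; exact: HBs.
    move=> r0 i j Hc; exact: GP_transfer (HG r0 i j Hc).
move=> x xA.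
case: (classic (ordered_basis M x)) => Hx; last first.
  have p0 : psi x = hzero F by apply: NNPP => H; apply: Hx; apply/Hpsupp.
  have q0 : phit x = hzero F by apply: NNPP => H; apply: Hx; apply/(Hsupp _ xA).
  by rewrite /phi p0 q0 !hmulr0.
case: (Hx) => xinj xM.
have SA : [set x i | i : 'I_r] \subset A by apply/subsetP => e /imsetP[i _ ->].
have cS : #|[set x i | i : 'I_r]| = r by rewrite card_imset // card_ord.
have c1 : #|A :\: [set x i | i : 'I_r]| == 1.
  by rewrite cardsD (setIidPr SA) HA cS subSnn.
case/cards1P: c1 => a Ha.
have aA : a \in A.
  have : a \in A :\: [set x i | i : 'I_r] by rewrite Ha set11.
  by rewrite in_setD => /andP[].
have SE : [set x i | i : 'I_r] = A :\ a.
  apply/setP => e; rewrite in_setD1; have : (e \in A :\: [set x i | i : 'I_r]) = (e \in [set a]) by rewrite Ha.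
  rewrite !inE.
  case eS: (e \in [set x i | i : 'I_r]) => /= H.
    by rewrite -H /= (subsetP SA e eS).
  by rewrite H; case: (e == a).
have aM : A :\ a \in M by rewrite -SE.
have [xinj' ximg] := Hrep' a aA.
have [s Hs] : exists s : 'S_r, x = [ffun i => rep a (s i)].
  by apply: perm_between => //; rewrite ximg -SE.
rewrite Hs Halt; last exact: repA.
rewrite /phi Tp_perm psialt.
rewrite (hmulCA (Tp t (rep a))) (hmulCA al); congr (hmul _ _).
have HT : hmul (t a) (Tp t (rep a)) = P.
  rewrite /P (bigD1 a) //=; congr hmul; symmetry.
  transitivity (\big[@hmul F/hone F]_(e in [set rep a i | i : 'I_r]) t e).
    by apply: eq_bigl => e; rewrite ximg in_setD1 andbC.
  rewrite big_imset /=; last by move=> ? ? _ _; apply: xinj'.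
  by rewrite /Tp; apply: eq_bigl => i.
have ta : t a = hinv (rho a) by rewrite /t aA aM.
have [_ hh] := hinvK (rho0 a aA aM).
have pne : psi (rep a) <> hzero F by apply/Hpsupp; apply: repB.
rewrite -[Tp t (rep a)]hmulr1 -(hmulV (t0 a)) (hmulA (Tp t (rep a))) (hmulC (Tp t (rep a))) HT ta hh.
rewrite /al /rho -!hmulA (hmulA (hinv P)) (hmulC (hinv P)) (hmulV P0) hmul1.
by rewrite (hmulC (hinv _)) (hmulV pne) hmulr1.
Qed.
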